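(* For every $n\in\mathbb{N}$, $4^{-n}\det[D^{(1)}_{i+j}]_{0\le i,j\le n}$ is a positive odd integer.
   Context: For $m\in\mathbb{N}$, $D^{(1)}_m=\sum_{k=0}^m\binom{m}{k}\binom{2k}{k}\binom{2(m-k)}{m-k}$. $\det[a_{i+j}]_{0\le i,j\le n}$ denotes the determinant of the $(n+1)\times(n+1)$ Hankel matrix with $(i,j)$-entry $a_{i+j}$. *)

(* Defs.v *)
From HB Require Import structures.
From mathcomp Require Import all_boot all_order all_algebra.
Set Implicit Arguments. Unset Strict Implicit. Unset Printing Implicit Defensive.
Import Order.TTheory GRing.Theory Num.Theory.

Definition D1 (m : nat) : nat :=
  \sum_(0 <= k < m.+1) 'C(m, k) * 'C(k.*2, k) * 'C((m - k).*2, m - k).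

Definition hankelD1 (n : nat) : 'M[int]_(n.+1) :=
  \matrix_(i < n.+1, j < n.+1) Posz (D1 (i + j)).

(* Main.v *)
Require Import Defs.
From HB Require Import structures.
From mathcomp Require Import all_boot all_order all_algebra.
From mathcomp Require Import zify ring lra.
From mathcomp.real_closed Require Import realalg.
Import Order.TTheory GRing.Theory Num.Theory.

Lemma bin_par m : forall j, odd 'C(m.*2, j.*2) = odd 'C(m,j) /\ odd 'C(m.*2, j.*2.+1) = false.
Proof.
elim: m => [|m IH] j.
  by case: j.
have O : forall j, odd 'C(m.*2.+1, j.*2.+1) = odd 'C(m, j).
  move=> i; rewrite binS oddD (proj1 (IH i)) (proj2 (IH i)). by case: (odd _).
have O2 : forall j, odd 'C(m.*2.+1, j.*2) = odd 'C(m, j).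
  case=> [|i]; first by rewrite !bin0.
  rewrite doubleS binS oddD (proj1 (IH i.+1)) (proj2 (IH i)). by case: (odd _).
split.
  case: j => [|j]; first by rewrite !bin0.
  rewrite !doubleS binS oddD (O j) (O2 j.+1) binS oddD.
  by rewrite addbC.
rewrite !doubleS binS oddD (O j) (O2 j).
by case: (odd _).
Qed.

Definition bb (s : nat) := 'C(s.*2.+1, s).

Lemma c_b k : 'C((k.+1).*2, k.+1) = 2 * bb k.
Proof.
rewrite /bb doubleS binS.
have -> : 'C(k.*2.+1, k.+1) = 'C(k.*2.+1, k).
  have H := @bin_sub k.*2.+1 k. rewrite -H; last by lia.
  congr binomial; lia.
lia.
Qed.

Lemma bb0 : bb 0 = 1. Proof. by []. Qed.
Lemma bb_odd k : odd (bb k.*2.+1) = odd (bb k).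
Proof.
rewrite /bb binS oddD (proj2 (bin_par (k.*2.+1) k)) (proj1 (bin_par (k.*2.+1) k)).
by [].
Qed.

Lemma bb_even k : odd (bb k.*2.+2) = false.
Proof.
rewrite /bb binS oddD.
have -> : k.*2.+2 = (k.+1).*2 by rewrite doubleS.
rewrite (proj2 (bin_par (k.+1).*2 k)) (proj1 (bin_par (k.+1).*2 k.+1)) c_b.
by rewrite oddM.
Qed.
Lemma pair_even w : forall (f : nat -> nat),
  (forall x, x <= w -> f x = f (w - x)) ->
  (~~ odd w -> ~~ odd (f w./2)) ->
  ~~ odd (\sum_(0 <= k < w.+1) f k).
Proof.
elim/ltn_ind: w => w IH f Hs Hm.
case: w IH Hs Hm => [|[|w]] IH Hs Hm.
- by rewrite big_nat1; apply: Hm.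
- rewrite big_nat_recl // big_nat1.
  have := Hs 0 isT. rewrite subn0 => ->.
  by rewrite oddD; case: (odd _).
rewrite big_nat_recl // big_nat_recr //=.
have H0 := Hs 0 isT. rewrite subn0 in H0.
have := IH w (ltnW (ltnSn _)) (fun k => f k.+1).
move=> /(_ _ _) H1.
have {H1} H1 : ~~ odd (\sum_(0 <= k < w.+1) f k.+1).
  apply: H1.
  - move=> x Hx. rewrite Hs; last by lia.
    congr f; lia.
  - move=> Hw; apply: Hm; by rewrite /= negbK.
move: H1; rewrite !oddD H0.
by case: (odd _); case: (odd _).
Qed.

Definition Sm u := \sum_(0 <= k < u) 'C(u.+1, k.+1) * bb k * bb (u - k.+1).
Definition ee u := bb u + Sm u.

Lemma D1S u : D1 u.+1 = 4 * ee u.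
Proof.
rewrite /D1 big_nat_recl // big_nat_recr //=.
rewrite bin0 subn0 binn subnn mul1n muln1 !c_b.
rewrite /ee /Sm.
rewrite (@eq_big_nat _ _ _ 0 u _ (fun k => 4 * ('C(u.+1, k.+1) * bb k * bb (u - k.+1)))); last first.
  move=> k /andP [_ Hk].
  have -> : u.+1 - k.+1 = (u - k.+1).+1 by lia.
  rewrite !c_b. nia.
rewrite -big_distrr /= bin0. lia.
Qed.

Lemma Sm_even u : ~~ odd (Sm u).
Proof.
rewrite /Sm.
case: u => [|u]; first by rewrite big_geq.
apply: pair_even.
  move=> x Hx.
  have -> : u.+1 - (u - x).+1 = x by lia.
  have -> : u.+1 - x.+1 = u - x by lia.
  rewrite -(@bin_sub u.+2 (u - x).+1); last by lia.
  have -> : u.+2 - (u - x).+1 = x.+1 by lia.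
  by rewrite mulnAC.
move=> Hu.
have Hu2 : u = u./2.*2 by rewrite -{1}(odd_double_half u) (negbTE Hu).
have -> : u.+1 - (u./2).+1 = u./2 by rewrite -!muln2 in Hu2 *; lia.
have -> : u.+2 = (u./2).+1.*2 by rewrite -!muln2 in Hu2 *; lia.
by rewrite c_b !oddM.
Qed.

Lemma ee_odd u : odd (ee u) = odd (bb u).
Proof. by rewrite /ee oddD (negbTE (Sm_even u)) addbF. Qed.
Fixpoint Lp (i k : nat) : nat :=
  match i with
  | 0 => nat_of_bool (k == 0)
  | i'.+1 => (if k is k'.+1 then Lp i' k' else 0) + Lp i' k.+1
  end.

Lemma Lp_gt i k : i < k -> Lp i k = 0.
Proof.
elim: i k => [|i IH] [|k] //= H.
rewrite !IH //; lia.
Qed.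

Lemma Lp_diag i : Lp i i = 1.
Proof. elim: i => [|i IH] //=; by rewrite IH Lp_gt. Qed.

Lemma LpS i k : Lp i.+1 k = (if k is k'.+1 then Lp i k' else 0) + Lp i k.+1.
Proof. by []. Qed.

Lemma Lp_par t a : odd (Lp t.*2.+1 a.*2.+1) = odd (Lp t a).
Proof.
elim: t a => [|t IH] a.
  case: a => [|a] //=.
have E : forall k, Lp (t.+1).*2.+1 k.+1 = Lp t.*2.+1 k.+1 + (Lp t.*2.+1 k.+1 + Lp t.*2.+1 k.+3) + (if k is k'.+1 then Lp t.*2.+1 k' else 0).
  move=> k. rewrite doubleS. case: k => [|k] /=; [lia | case: k => [|k] /=; lia].
have OE : forall x y z, odd (x + (x + y) + z) = odd (y + z).
  move=> x y z; rewrite !oddD; by case: (odd x); case: (odd y); case: (odd z).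
case: a => [|a].
  rewrite (E 0) OE addn0 [Lp t.+1 0]LpS add0n.
  exact: (IH 1).
rewrite [a.+1.*2]doubleS E OE [Lp t.+1 a.+1]LpS.
rewrite oddD oddD addbC; congr addb; [exact: (IH a) | exact: (IH a.+2)].
Qed.

Lemma Lp_shiftA K i (f : nat -> nat) : i < K ->
  \sum_(0 <= k < K) Lp i k * (if k is k'.+1 then f k' else 0) =
  \sum_(0 <= k < K) Lp i k.+1 * f k.
Proof.
case: K => [//|K] HK.
rewrite big_nat_recl // big_nat_recr //= muln0 add0n Lp_gt // mul0n addn0.
by [].
Qed.

Lemma Lp_shift K i j : i < K -> j < K ->
  \sum_(0 <= k < K) Lp i k * Lp j.+1 k = \sum_(0 <= k < K) Lp i.+1 k * Lp j k.
Proof.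
move=> Hi Hj.
under eq_bigr do rewrite LpS mulnDr.
under [RHS]eq_bigr do rewrite LpS mulnDl.
rewrite !big_split /= Lp_shiftA //.
rewrite addnC; congr addn.
have := Lp_shiftA K j (Lp i) Hj.
under eq_bigr do rewrite mulnC.
move=> ->.
by apply: eq_bigr => k _; rewrite mulnC.
Qed.

Lemma Lp_sum K j i : i + j < K ->
  \sum_(0 <= k < K) Lp i k * Lp j k = Lp (i + j) 0.
Proof.
elim: j i => [|j IH] i H.
  rewrite addn0.
  case: K H => [//|K] H.
  rewrite big_nat_recl //= muln1.
  rewrite big1 ?addn0 // => k _; by rewrite muln0.
rewrite Lp_shift; [|lia|lia].
rewrite IH; [congr Lp; lia | lia].
Qed.

Lemma Lp_sum_trunc K K' i (f : nat -> nat) : i < K -> i < K' ->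
  \sum_(0 <= k < K) Lp i k * f k = \sum_(0 <= k < K') Lp i k * f k.
Proof.
have H : forall K, i < K -> \sum_(0 <= k < K) Lp i k * f k = \sum_(0 <= k < i.+1) Lp i k * f k.
  move=> L HL. rewrite (big_cat_nat _ (n:=i.+1)) //=.
  rewrite [X in _ + X]big1_seq ?addn0 // => k; rewrite mem_index_iota => /and3P [_ H1 H2].
  by rewrite Lp_gt ?mul0n.
by move=> /H -> /H ->.
Qed.

Lemma Lp_oddsum i k : odd (i + k) -> Lp i k = 0.
Proof.
elim: i k => [|i IH] [|k] //= H.
- rewrite IH // addn1 /=. by rewrite addn0 in H.
- have H1 : odd (i + k) by move: H; rewrite addnS /= negbK.
  rewrite !IH //. by rewrite !addnS /= negbK.
Qed.

Lemma bb_Lp s : odd (bb s.+1) = odd (Lp s 0).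
Proof.
elim/ltn_ind: s => s IH.
have Hs := odd_double_half s.
case/boolP: (odd s) => Ho; [rewrite Ho /= in Hs | rewrite (negbTE Ho) /= in Hs].
  rewrite -Hs bb_even Lp_oddsum //. by rewrite addn0 /= odd_double.
case E: s./2 => [|t]; rewrite E /= in Hs.
  by rewrite -Hs.
rewrite -Hs doubleS add0n.
rewrite -[(t.*2.+2).+1]/((t.+1).*2.+1) bb_odd (IH t); last by rewrite -Hs doubleS; lia.
rewrite LpS add0n.
by rewrite (Lp_par t 0).
Qed.



Definition cc (s : nat) := 'C(s.*2, s).

Definition EE i j := \sum_(0 <= a < i.+1) 'C(i, a) * \sum_(0 <= b < j.+1)
   'C(j, b) * (cc (a + b) * cc (i - a + (j - b))).

Lemma pascal_sum i (h : nat -> nat) :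
  \sum_(0 <= a < i.+2) 'C(i.+1, a) * h a =
  \sum_(0 <= a < i.+1) 'C(i, a) * (h a + h a.+1).
Proof.
rewrite big_nat_recl // bin0 mul1n.
under eq_bigr do rewrite binS mulnDl.
rewrite big_split /=.
under [RHS]eq_bigr do rewrite mulnDr.
rewrite big_split /= addnA; congr addn.
rewrite [RHS]big_nat_recl // bin0 mul1n; congr addn.
by rewrite big_nat_recr //= bin_small // mul0n addn0.
Qed.

Lemma EE_shift i j : EE i.+1 j = EE i j.+1.
Proof.
rewrite /EE.
rewrite (pascal_sum i (fun a => \sum_(0 <= b < j.+1) 'C(j, b) * (cc (a + b) * cc (i.+1 - a + (j - b))))).
apply: eq_big_nat => a /andP [_ Ha].
congr muln.
rewrite (pascal_sum j (fun b => cc (a + b) * cc (i - a + (j.+1 - b)))).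
rewrite -big_split /=.
apply: eq_big_nat => b /andP [_ Hb].
rewrite -mulnDr; congr muln.
have -> : i.+1 - a + (j - b) = i - a + (j.+1 - b) by lia.
have -> : i.+1 - a.+1 + (j - b) = i - a + (j - b) by lia.
have -> : a.+1 + b = (a + b).+1 by lia.
have -> : a + b.+1 = (a + b).+1 by lia.
by [].
Qed.

Lemma EE_D1 j i : EE i j = D1 (i + j).
Proof.
elim: j i => [|j IH] i.
  rewrite /EE /D1 addn0; apply: eq_big_nat => a /andP [_ Ha].
  by rewrite big_nat1 bin0 mul1n addn0 subn0 mulnA addn0.
by rewrite -EE_shift IH addSnnS.
Qed.
Local Open Scope ring_scope.

Definition dd (i : nat) : nat := if i == 0%N then 1%N else 2%N.

Definition Mmx n : 'M[int]_(n.+1) :=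
  \matrix_(i < n.+1, j < n.+1) Posz (D1 (i + j) %/ (dd i * dd j)).

Definition Lent (i k : nat) : nat :=
  if i is i'.+1 then (if k is k'.+1 then Lp i' k' else 0%N) else nat_of_bool (k == 0%N).

Definition L2 n : 'M[int]_(n.+1) := \matrix_(i < n.+1, k < n.+1) Posz (Lent i k).

Definition Dr n : 'rV[int]_(n.+1) := \row_(i < n.+1) Posz (dd i).

Lemma dd_div i j : (dd i * dd j %| D1 (i + j))%N.
Proof.
rewrite /dd.
case: i => [|i]; case: j => [|j] //=.
- rewrite add0n D1S. apply/dvdnP; exists (2 * ee j)%N; lia.
- rewrite addn0 D1S. apply/dvdnP; exists (2 * ee i)%N; lia.
- rewrite addSn D1S. by apply: dvdn_mulr.
Qed.

Lemma hank_dec n : hankelD1 n = diag_mx (Dr n) *m Mmx n *m diag_mx (Dr n).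
Proof.
rewrite mul_diag_mx mul_mx_diag; apply/matrixP => i j; rewrite !mxE.
rewrite -!PoszM; congr Posz.
rewrite -{1}(divnK (dd_div i j)).
set q := (D1 (i + j) %/ _)%N. by rewrite mulnCA mulnA mulnC.
Qed.

Lemma det_Dr n : \det (diag_mx (Dr n)) = 2 ^+ n.
Proof.
rewrite det_diag big_ord_recl !mxE /= mul1r.
under eq_bigr do rewrite mxE.
rewrite /dd /=.
by rewrite prodr_const card_ord.
Qed.

Lemma det_hank n : \det (hankelD1 n) = 4 ^+ n * \det (Mmx n).
Proof.
rewrite hank_dec !det_mulmx det_Dr mulrC mulrA -exprMn.
by [].
Qed.

Lemma sum_Lent n (i j : nat) : (i <= n)%N -> (j <= n)%N ->
  (\sum_(k < n.+1) Lent i k * Lent j k)%N =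
  if (i == 0%N) && (j == 0%N) then 1%N
  else if (i == 0%N) || (j == 0%N) then 0%N else Lp (i.-1 + j.-1) 0.
Proof.
move=> Hi Hj.
rewrite big_ord_recl /=.
under eq_bigr do rewrite /bump /=.
case: i Hi => [|i] Hi; case: j Hj => [|j] Hj /=.
- by rewrite big1 // => k _.
- by rewrite big1 // => k _.
- by rewrite big1 // => k _; rewrite muln0.
rewrite add0n.
rewrite -(big_mkord xpredT (fun k => Lp i k * Lp j k)%N).
rewrite (Lp_sum_trunc n (i + j).+1); [|lia|lia].
by rewrite Lp_sum.
Qed.

Lemma D1_0 : D1 0 = 1%N.
Proof. by rewrite /D1 big_nat1. Qed.

Lemma par_entry n (i j : 'I_n.+1) :
  odd (D1 (i + j) %/ (dd i * dd j)) = odd (\sum_(k < n.+1) Lent i k * Lent j k).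
Proof.
rewrite sum_Lent; [|by rewrite -ltnS|by rewrite -ltnS].
case: i => [[|i] Hi]; case: j => [[|j] Hj] /=.
- by rewrite D1_0.
- rewrite add0n D1S /dd /= mul1n.
  rewrite -[4%N]/(2 * 2)%N -mulnA mulKn //. by rewrite oddM.
- rewrite addn0 D1S /dd /= muln1.
  rewrite -[4%N]/(2 * 2)%N -mulnA mulKn //. by rewrite oddM.
rewrite addSn D1S /dd /= mulKn // ee_odd.
by rewrite addnS bb_Lp.
Qed.

Lemma prime2 : prime 2. Proof. by []. Qed.

Lemma F2_nat (a : nat) : (a%:R : 'F_2) = (odd a)%:R.
Proof. by rewrite -(Fp_nat_mod prime2) modn2. Qed.

Lemma L2_trig n : is_trig_mx (L2 n).
Proof.
apply/is_trig_mxP => i k Hik; rewrite mxE.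
case: i Hik => [[|i] Hi]; case: k => [[|k] Hk] //= H.
by rewrite Lp_gt.
Qed.

Lemma det_L2 n : \det (L2 n) = 1.
Proof.
rewrite det_trig ?L2_trig // big1 // => i _; rewrite mxE.
case: i => [[|i] Hi] //=.
by rewrite Lp_diag.
Qed.

Lemma detM_F2 n : ((\det (Mmx n))%:~R : 'F_2) = 1.
Proof.
have E : map_mx intr (Mmx n) = map_mx (intr : int -> 'F_2) (L2 n) *m (map_mx intr (L2 n))^T.
  apply/matrixP => i j; rewrite !mxE.
  under eq_bigr do rewrite !mxE.
  rewrite -[_%:~R]/(_%:R) F2_nat par_entry -F2_nat natr_sum.
  by apply: eq_bigr => k _; rewrite natrM.
rewrite -det_map_mx E det_mulmx det_tr det_map_mx det_L2.
by rewrite mulr1.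
Qed.

Lemma vvT_pos (R : realDomainType) n (v : 'rV[R]_n) : v != 0 -> 0 < (v *m v^T) 0 0.
Proof.
move=> v0.
case/boolP: [forall j, v 0 j == 0] => H.
  case/negP: v0; apply/eqP/matrixP => i j; rewrite ord1 !mxE; exact/eqP/(forallP H j).
move/forallPn: H => [j Hj].
rewrite mxE (bigD1 j) //= !mxE.
have h1 : 0 < v 0 j * v 0 j by rewrite -expr2 lt0r sqrf_eq0 Hj sqr_ge0.
have h2 : 0 <= \sum_(i | i != j) v 0 i * v^T i 0.
  apply: sumr_ge0 => i _; rewrite mxE -expr2; exact: sqr_ge0.
lra.
Qed.

Lemma pd_det (R : rcfType) n (A : 'M[R]_n) :
  (forall v : 'rV[R]_n, v != 0 -> 0 < (v *m A *m v^T) 0 0) -> 0 < \det A.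
Proof.
move=> HA.
pose B (t : R) := t *: A + (1 - t) *: 1%:M.
have HB : forall t, 0 <= t <= 1 -> \det (B t) != 0.
  move=> t /andP[t0 t1]; apply/negP => /det0P [v v0 vB].
  have : (v *m B t *m v^T) 0 0 = 0 by rewrite vB mul0mx mxE.
  rewrite /B mulmxDr -!scalemxAr mulmx1 mulmxDl -!scalemxAl !mxE.
  have h1 := HA v v0; have h2 := vvT_pos _ _ v v0.
  rewrite mxE in h1; rewrite mxE in h2.
  move=> h. nra.
pose P : 'M[{poly R}]_n := \matrix_(i, j) (A i j *: 'X + (i == j)%:R *: (1 - 'X)).
have HP : forall t, (\det P).[t] = \det (B t).
  move=> t; rewrite -horner_evalE -det_map_mx; congr (\det _); apply/matrixP => i j.
  rewrite !mxE /= horner_evalE !hornerE /=.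
  ring.
have [//|dle] := ltrP 0 (\det A).
have := @poly_ivt R (- \det P) 0 1 ler01.
rewrite !hornerN !HP.
have -> : B 0 = 1%:M by rewrite /B scale0r add0r subr0 scale1r.
have -> : B 1 = A by rewrite /B scale1r subrr scale0r addr0.
rewrite det1 oppr_le0 oppr_ge0 ler01 dle => /(_ isT) [x Hx].
rewrite /root hornerN oppr_eq0 HP.
by rewrite (negbTE (HB x Hx)).
Qed.

Section PolyV.
Variable R : comNzRingType.
Local Open Scope ring_scope.

Lemma coef_1X m k : ((1 + 'X)^+m : {poly R})`_k = ('C(m, k))%:R.
Proof.
elim: m k => [|m IH] k.
  by rewrite expr0 coef1; case: k.
rewrite exprSr mulrDr mulr1 coefD coefMX IH.
case: k => [|k] /=; first by rewrite !bin0 addr0.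
by rewrite IH binS natrD addrC.
Qed.

Definition pp (N x : nat) : {poly R} := 'X^(N - x) * (1 + 'X)^+(x.*2).

Lemma coef_pp N x r : (pp N x)`_r = if (r < N - x)%N then 0 else ('C(x.*2, r - (N - x)))%:R.
Proof. by rewrite /pp coefXnM coef_1X. Qed.

Lemma pp_sym N x r : (x <= N)%N -> (r <= N.*2)%N -> (pp N x)`_r = (pp N x)`_(N.*2 - r).
Proof.
move=> Hx Hr; rewrite !coef_pp.
case: ifP => H1; case: ifP => H2.
- by [].
- rewrite bin_small //; lia.
- rewrite bin_small //; lia.
case: (leqP (r - (N - x)) x.*2) => H3.
  rewrite -bin_sub //; congr (_%:R); congr binomial; lia.
rewrite !bin_small //; lia.
Qed.

Lemma pp_mul N x y : (x <= N)%N -> (y <= N)%N ->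
  pp N x * pp N y = 'X^(N.*2 - (x + y)) * (1 + 'X)^+((x + y).*2).
Proof.
move=> Hx Hy; rewrite /pp mulrACA -exprD -exprD.
congr (_ * _); [congr (_ ^+ _) | congr (_ ^+ _)]; lia.
Qed.

Lemma cc_sep N x y : (x <= N)%N -> (y <= N)%N ->
  ('C((x + y).*2, x + y))%:R = \sum_(r < (N.*2).+1) (pp N x)`_r * (pp N y)`_r :> R.
Proof.
move=> Hx Hy.
have : (pp N x * pp N y)`_(N.*2) = ('C((x + y).*2, x + y))%:R.
  rewrite pp_mul // coefXnM ifF; last by apply/negbTE; rewrite -leqNgt; lia.
  rewrite coef_1X; congr (_%:R); congr binomial; lia.
move=> <-; rewrite coefM; apply: eq_bigr => r _.
rewrite [in RHS](pp_sym _ _ _ Hy) //; last by rewrite -ltnS.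
Qed.
End PolyV.

Local Open Scope ring_scope.
Section Usec.
Variable R : comNzRingType.
Variable n : nat.

Definition Vr (a r : nat) : R := (pp R n a)`_r.
Definition UU (i r t : nat) : R :=
  \sum_(0 <= a < i.+1) ('C(i, a))%:R * (Vr a r * Vr (i - a) t).

Lemma UU_id i j : (i <= n)%N -> (j <= n)%N ->
  \sum_(r < (n.*2).+1) \sum_(t < (n.*2).+1) UU i r t * UU j r t = (D1 (i + j))%:R.
Proof.
move=> Hi Hj.
rewrite -EE_D1 /EE natr_sum.
have E1 : forall a b, (a <= i)%N -> (b <= j)%N ->
   ((cc (a + b) * cc (i - a + (j - b)))%N)%:R =
   \sum_(r < (n.*2).+1) \sum_(t < (n.*2).+1) (Vr a r * Vr b r) * (Vr (i - a) t * Vr (j - b) t) :> R.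
  move=> a b Ha Hb.
  rewrite natrM /cc (cc_sep R n a b) ?(cc_sep R n (i - a) (j - b)); [|lia|lia|lia|lia].
  rewrite big_distrl /=; apply: eq_bigr => r _.
  by rewrite big_distrr.
rewrite (@eq_big_nat _ _ _ 0 i.+1 _ (fun a => \sum_(0 <= b < j.+1) \sum_(r < (n.*2).+1) \sum_(t < (n.*2).+1)
   ('C(i, a))%:R * ('C(j, b))%:R * ((Vr a r * Vr b r) * (Vr (i - a) t * Vr (j - b) t)))); last first.
  move=> a /andP [_ Ha].
  rewrite natrM natr_sum big_distrr /=; apply: eq_big_nat => b /andP [_ Hb].
  rewrite natrM E1; [|lia|lia].
  rewrite !big_distrr /=; apply: eq_bigr => r _.
  rewrite !big_distrr /=; apply: eq_bigr => t _.
  by rewrite mulrA.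
under [RHS]eq_bigr => a _ do rewrite exchange_big.
under [RHS]eq_bigr => a _ do under eq_bigr => r _ do rewrite exchange_big.
rewrite [RHS]exchange_big.
under [RHS]eq_bigr => r _ do rewrite exchange_big.
apply: eq_bigr => r _; apply: eq_bigr => t _.
rewrite /UU big_distrl /=; apply: eq_bigr => a _.
rewrite big_distrr /=; apply: eq_bigr => b _.
ring.
Qed.
Lemma UU_lt i m : (m <= n)%N -> (i < m)%N -> UU i (n + m) n = 0.
Proof.
move=> Hm Him; rewrite /UU big1_seq // => a; rewrite mem_index_iota => Ha.
have {Ha} Ha : (a < i.+1)%N by case/andP: Ha.
rewrite /Vr coef_pp ifF; last by apply/negbTE; rewrite -leqNgt; lia.
rewrite (@bin_small a.*2); last by rewrite -?muln2; lia.
by rewrite mul0r mulr0.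
Qed.

Lemma UU_eq m : (m <= n)%N -> UU m (n + m) n = 1.
Proof.
move=> Hm; rewrite /UU big_nat_recr //= big1_seq ?add0r; last first.
  move=> a; rewrite mem_index_iota => Ha.
  have {Ha} Ha : (a < m)%N by case/andP: Ha.
  rewrite /Vr coef_pp ifF; last by apply/negbTE; rewrite -leqNgt; lia.
  rewrite (@bin_small a.*2); last by rewrite -?muln2; lia.
  by rewrite mul0r mulr0.
rewrite binn subnn /Vr !coef_pp !ifF; last first.
  by apply/negbTE; rewrite -leqNgt; lia.
  by apply/negbTE; rewrite -leqNgt; lia.
have -> : (n + m - (n - m) = m.*2)%N by rewrite -?muln2; lia.
by rewrite subn0 subnn !binn !mul1r.
Qed.
End Usec.

Lemma quad_pos (R : rcfType) n (v : 'rV[R]_(n.+1)) : v != 0 ->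
  0 < (v *m map_mx intr (hankelD1 n) *m v^T) 0 0.
Proof.
move=> v0.
pose w (r t : nat) := \sum_(i < n.+1) v 0 i * UU R n i r t.
have Eq : (v *m map_mx intr (hankelD1 n) *m v^T) 0 0 =
    \sum_(r < (n.*2).+1) \sum_(t < (n.*2).+1) w r t * w r t.
  have HE : forall i j : 'I_(n.+1), (map_mx intr (hankelD1 n)) i j =
      \sum_(r < (n.*2).+1) \sum_(t < (n.*2).+1) UU R n i r t * UU R n j r t.
    move=> i j; rewrite !mxE UU_id //; by rewrite -ltnS.
  rewrite mxE.
  under eq_bigr => i _ do rewrite !mxE.
  under eq_bigr => i _ do under eq_bigr => j _ do rewrite HE.
  rewrite (eq_bigr _ (fun i _ => mulr_suml _ _ _ _)).
  pose F (i j : 'I_(n.+1)) (r t : 'I_((n.*2).+1)) := v 0 j * UU R n j r t * (v 0 i * UU R n i r t).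
  transitivity (\sum_i \sum_j \sum_r \sum_t F i j r t).
    apply: eq_bigr => i _; apply: eq_bigr => j _.
    rewrite mulr_sumr mulr_suml; apply: eq_bigr => r _.
    rewrite mulr_sumr mulr_suml; apply: eq_bigr => t _.
    rewrite /F; ring.
  transitivity (\sum_i \sum_r \sum_t \sum_j F i j r t).
    apply: eq_bigr => i _; rewrite exchange_big; apply: eq_bigr => r _.
    by rewrite exchange_big.
  rewrite exchange_big; apply: eq_bigr => r _.
  rewrite exchange_big; apply: eq_bigr => t _.
  rewrite /w mulr_suml; apply: eq_bigr => i _.
  rewrite mulr_sumr; apply: eq_bigr => j _.
  rewrite /F; ring.
rewrite Eq.
have [j0 Hj0] : exists j0, v 0 j0 != 0.
  case/boolP: [forall j, v 0 j == 0] => H.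
    case/negP: v0; apply/eqP/matrixP => i j; rewrite ord1 !mxE; exact/eqP/(forallP H j).
  by move/forallPn: H => [j Hj]; exists j.
case: (@arg_maxnP _ j0 (fun j => v 0 j != 0) (fun j => nat_of_ord j) Hj0) => m Hm Hmax.
have Hwm : w (n + m)%N n = v 0 m.
  rewrite /w (bigD1 m) //= UU_eq; last by rewrite -ltnS.
  rewrite mulr1 big1 ?addr0 // => i Hi.
  case: (ltngtP i m) => Hlt.
  - by rewrite UU_lt ?mulr0 // -ltnS.
  - have : v 0 i == 0.
      apply/negPn/negP => Hv. have H := Hmax i Hv. have H' : (i <= m)%N := H. by move: (leq_trans Hlt H'); rewrite ltnn.
    by move/eqP ->; rewrite mul0r.
  - by move: Hi; rewrite -(inj_eq val_inj) /= Hlt eqxx.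
have Hr : (n + m < (n.*2).+1)%N by rewrite -addnn ltnS leq_add2l -ltnS.
have Ht : (n < (n.*2).+1)%N by rewrite -addnn ltnS leq_addr.
rewrite (bigD1 (Ordinal Hr)) //= (bigD1 (Ordinal Ht)) //= Hwm.
have h1 : 0 < v 0 m * v 0 m by rewrite -expr2 lt0r sqrf_eq0 Hm sqr_ge0.
have h2 : 0 <= \sum_(t < (n.*2).+1 | t != Ordinal Ht) w (n + m)%N t * w (n + m)%N t.
  apply: sumr_ge0 => t _; rewrite -expr2; exact: sqr_ge0.
have h3 : 0 <= \sum_(r < (n.*2).+1 | r != Ordinal Hr) \sum_(t < (n.*2).+1) w r t * w r t.
  apply: sumr_ge0 => r _; apply: sumr_ge0 => t _; rewrite -expr2; exact: sqr_ge0.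
lra.
Qed.

Theorem mainTheorem9 (n : nat) :
  exists m : nat, \det (hankelD1 n) = (4 ^+ n * m%:Z) /\ (0 < m)%N /\ odd m.
Proof.
have Hpos : 0 < \det (hankelD1 n).
  have := pd_det realalg _ (map_mx (intr : int -> realalg) (hankelD1 n)) (quad_pos realalg n).
  by rewrite det_map_mx ltr0z.
have HM : 0 < \det (Mmx n).
  by move: Hpos; rewrite det_hank pmulr_rgt0 // exprn_gt0.
case E: (\det (Mmx n)) HM => [m|m] HM; last by [].
exists m; split; first by rewrite det_hank E.
split; first by move: HM; case: m {E}.
have := detM_F2 n; rewrite E.
rewrite -[_%:~R]/(m%:R) F2_nat.
by case: (odd m) => //= /eqP; rewrite eq_sym oner_eq0.
Qed.
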